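(* Let $k\ge 1$, $\tau=1000k$, $\rho=1-\frac{1}{10\tau}$, and let $g:\{0,1\}^n\to\{0,1\}$ be a $k$-term DNF. If $y^1\in\{0,1\}^n$ satisfies $g_{\le\tau}(y^1)=1$, then $T_\rho g(y^1)\ge 0.9$.
   Context: $g_{\le L}$ is the sub-DNF of $g$ consisting of terms with at most $L$ literals. For $x\in\{0,1\}^n$, $\mathbf{y}\sim N_\rho(x)$ means each bit independently has $\mathbf{y}_i=x_i$ with probability $\rho$ and $\mathbf{y}_i=1-x_i$ with probability $1-\rho$. The noise operator is $T_\rho g(x)=\mathbb{E}_{\mathbf{y}\sim N_\rho(x)}[g(\mathbf{y})]$. *)

(* Defs.v *)
From HB Require Import structures.
From mathcomp Require Import all_boot all_order all_algebra.
Set Implicit Arguments. Unset Strict Implicit. Unset Printing Implicit Defensive.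
Import Order.TTheory GRing.Theory Num.Theory.

Definition cube (n : nat) := {ffun 'I_n -> bool}.

(* A term (conjunction of literals) over n variables: for each variable,
   None = variable absent, Some b = literal "x_i = b" present. *)
Definition term (n : nat) := {ffun 'I_n -> option bool}.

Definition term_width n (t : term n) : nat := #|[pred i | t i != None]|.

Definition term_sat n (t : term n) (x : cube n) : bool :=
  [forall i, if t i is Some b then x i == b else true].

Definition dnf (n : nat) := seq (term n).

Definition dnf_eval n (g : dnf n) (x : cube n) : bool :=
  has (fun t => term_sat t x) g.

Definition dnf_le n (L : nat) (g : dnf n) : dnf n :=
  [seq t <- g | term_width t <= L].

Local Open Scope ring_scope.

(* Probability that y ~ N_rho(x) equals a given y. *)
Definition noise_prob (R : nzRingType) n (rho : R) (x y : cube n) : R :=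
  \prod_(i : 'I_n) (if y i == x i then rho else 1 - rho).

Definition noise_op (R : nzRingType) n (rho : R) (f : cube n -> R) (x : cube n) : R :=
  \sum_(y : cube n) noise_prob rho x y * f y.

(* Main.v *)
Require Import Defs.
From HB Require Import structures.
From mathcomp Require Import all_boot all_order all_algebra.
From mathcomp Require Import lra.
Import Order.TTheory GRing.Theory Num.Theory.
Local Open Scope ring_scope.

Lemma bern (R : realFieldType) (e : R) (w : nat) :
  0 <= e -> e <= 1 -> 1 - w%:R * e <= (1 - e) ^+ w.
Proof.
move=> e0 e1; elim: w => [|w IH]; first by rewrite expr0 mul0r subr0.
rewrite exprS -natr1.
have h : (1 - e) * (1 - w%:R * e) <= (1 - e) * (1 - e) ^+ w.
  by apply: ler_wpM2l => //; lra.
have w0 : 0 <= (w%:R : R) by [].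
apply: le_trans h; nra.
Qed.

Lemma key (R : realFieldType) n (rho : R) (t : term n) (y1 : cube n) :
  term_sat t y1 ->
  \sum_(y : cube n) noise_prob rho y1 y * (term_sat t y)%:R = rho ^+ term_width t.
Proof.
move=> Hs.
pose F := fun (i : 'I_n) (b : bool) =>
  (if b == y1 i then rho else 1 - rho) *
  (if t i is Some c then ((b == c)%:R : R) else 1).
transitivity (\sum_(y : {ffun 'I_n -> bool}) \prod_i F i (y i)).
  apply: eq_bigr => y _; rewrite /noise_prob /F big_split /=; congr (_ * _).
  rewrite /term_sat; case: (boolP [forall i, _]) => [/forallP H|/forallPn [i Hi]].
    by rewrite big1 //= => i _; have := H i; case: (t i) => [c /eqP ->|]; rewrite ?eqxx.
  rewrite (bigD1 i) //=; move: Hi; case: (t i) => [c /negbTE ->|] //=.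
  by rewrite mul0r.
rewrite -bigA_distr_bigA /=.
transitivity (\prod_i (if t i != None then rho else 1)).
  apply: eq_bigr => i _; rewrite big_bool /F.
  move/forallP: Hs => /(_ i).
  case: (t i) => [c /eqP Hc|] /=.
    rewrite -Hc; case: (y1 i) => /=; rewrite ?mulr1 ?mulr0 ?addr0 ?add0r //.
  rewrite !mulr1; case: (y1 i) => /=; lra.
by rewrite -big_mkcond prodr_const.
Qed.

Theorem claim6p4 (R : realFieldType) (n k : nat) (g : dnf n) (y1 : cube n) :
  (1 <= k)%N ->
  size g = k ->
  dnf_eval (dnf_le (1000 * k) g) y1 ->
  let tau : R := (1000 * k)%:R in
  let rho : R := 1 - 1 / (10 * tau) in
  9 / 10 <= noise_op rho (fun y => (dnf_eval g y)%:R) y1.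
Proof.
move=> k1 _ H; cbv zeta; set tau : R := (1000 * k)%:R; set rho := 1 - 1 / (10 * tau); move: H; rewrite /dnf_eval /dnf_le => /hasP [t]; rewrite mem_filter => /andP [Hw Hg] Hs.
have tau1 : 1000 <= tau by rewrite /tau natrM ler_peMr // ler1n.
set e := 1 / (10 * tau).
have e0 : 0 < e by rewrite /e divr_gt0 //; lra.
have ee : e * (10 * tau) = 1 by rewrite /e mulrC mulrA mulr1 divff //; lra.
have e_1 : e <= 1.
  have : e * 1 <= e * (10 * tau) by apply: ler_wpM2l; lra.
  lra.
have rho0 : 0 <= rho by rewrite /rho -/e; lra.
have rho1 : rho <= 1 by rewrite /rho -/e; lra.
have we : (term_width t)%:R * e <= 1 / 10.
  have : ((term_width t)%:R : R) <= tau by rewrite /tau ler_nat.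
  have w0 : 0 <= ((term_width t)%:R : R) by [].
  nra.
apply: le_trans (_ : rho ^+ term_width t <= _).
  have := @bern R e (term_width t) (ltW e0) e_1; rewrite /rho -/e; lra.
rewrite -(@key R n rho t y1 Hs) /noise_op; apply: ler_sum => y _.
apply: ler_wpM2l.
  by rewrite /noise_prob; apply: prodr_ge0 => i _; case: ifP => _; lra.
rewrite ler_nat; case Ht: (term_sat t y) => //.
have H : dnf_eval g y by apply/hasP; exists t.
by move: H; rewrite /dnf_eval => ->.
Qed.
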